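(* Let $\mathcal O$ be a polycube with orthogonally convex layers and let $1\le i\le m-1$. If the $i$-bridge determined by the selection procedure described in the context lies on a bottom face (i.e., on the bottom of $\mathcal O_{i+1}$), then it consists of a single beam.
   Context: A polycube $\mathcal O$ is an orthogonal polyhedron homeomorphic to a sphere formed as a union of unit cubes glued along entire faces; its surface is subdivided into unit squares called cells. Let $z_0<\dots<z_m$ be the distinct $z$-coordinates of vertices of $\mathcal O$; the $i$-plane is $z=z_i$; the layer $\mathcal O_i$ is the part of $\mathcal O$ between the $(i-1)$- and $i$-planes. $\mathcal O$ has orthogonally convex layers if each $\mathcal O_i$ meets every line parallel to a coordinate axis in a single segment or not at all. The $i$-band is the cyclic sequence of vertical surface cells between the $(i-1)$- and $i$-planes. A face is a maximal edge-connected set of coplanar cells; an $i$-face lies in the $i$-plane, either on top of $\mathcal O_i$ (top face) or on the bottom of $\mathcal O_{i+1}$ (bottom face). Adjacent means boundaries share a cell edge. Cells are parallel if in parallel planes; normals are outward normals; cw/ccw around a band is as viewed from $+z$. Beams: for a band cell $a$ (on the $i$- or $(i+1)$-band) whose horizontal edge $e$ in the $i$-plane is adjacent to an $i$-face, $i$-beam$(a)$ is the portion of that $i$-face illuminated by rays from $e$ in the horizontal direction orthogonal to $a$; otherwise it is empty. A nonempty beam has two anchors: $a$ and the band cell parallel to $a$ adjacent to the beam at its other end; both anchors define the same beam. Selection procedure. Each $i$-band gets a direction ($i$-pointer $\in\{cw,ccw\}$) and cells $L_i,R_i$. For an $i$-band cell $r$, $i$-clip$(r)$ is empty if $i$-beam$(r)$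 is empty, and otherwise is the portion of the $i$-face containing $i$-beam$(r)$ delimited by (and including) $i$-beam$(r)$ and extending from it in the direction of the $i$-pointer from $r$. Initialization: 1-pointer $=ccw$; choose a top 1-face $F$ and two opposite cell edges $e_1,e_2$ on its boundary with $e_1$ adjacent to the 1-band and $e_2$ adjacent to the 2-band; $R_1$ is the 1-band cell adjacent to $e_1$, $L_1$ is the 1-band cell adjacent to $R_1$ in the ccw direction, the 1-bridge is 1-beam$(R_1)$, $L_2$ is the 2-band cell adjacent to $e_2$, and the 2-pointer is $ccw$. Recursive step ($i\ge 2$, given $L_i$ and the $i$-pointer): walking around the $i$-band starting at $L_i$ in the direction of the $i$-pointer, $R_i$ is the last encountered $i$-band cell such that $i$-clip$(R_i)$ is empty or adjacent to an $(i+1)$-band cell parallel to $R_i$. If $i$-clip$(R_i)$ is empty, $L_{i+1}$ is the $(i+1)$-band cell adjacent to $R_i$, the $i$-bridge is empty and the $(i+1)$-pointer equals the $i$-pointer. Otherwise, partitioning $i$-clip$(R_i)$ into beams parallel to $i$-beam$(R_i)$: $L_{i+1}$ is the $(i+1)$-band cell parallel to $R_i$ and adjacent to $i$-clip$(R_i)$ minimizing the number of beams delimited by $i$-beam$(R_i)$ and $i$-beam$(L_{i+1})$, ties broken by minimum Manhattan distance to $R_i$; the $i$-bridge consists of $i$-beam$(R_i)$, $i$-beam$(L_{i+1})$ and the beams between them (its beams are those of this partition); the $(i+1)$-pointer equals the $i$-pointer if $R_i$ and $L_{i+1}$ have the same normal and is opposite otherwise. *)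

(* Defs.v *)
From Stdlib Require Import ZArith Reals List.
Import ListNotations.

Open Scope Z_scope.

(* the unit cube [x,x+1] x [y,y+1] x [z,z+1] is represented by (x,y,z) *)
Definition cube := (Z * Z * Z)%type.
Definition cx (c : cube) : Z := fst (fst c).
Definition cy (c : cube) : Z := snd (fst c).
Definition cz (c : cube) : Z := snd c.

Definition pos := (Z * Z)%type.
Definition xy (c : cube) : pos := (cx c, cy c).
Definition mkcube (p : pos) (z : Z) : cube := ((fst p, snd p), z).
Definition padd (p q : pos) : pos := (fst p + fst q, snd p + snd q).
Definition psub (p q : pos) : pos := (fst p - fst q, snd p - snd q).
Definition pscale (j : Z) (p : pos) : pos := (j * fst p, j * snd p).
Definition pdot (p q : pos) : Z := fst p * fst q + snd p * snd q.
Definition cshift (c : cube) (v : pos) : cube := ((cx c + fst v, cy c + snd v), cz c).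
Definition cup (c : cube) : cube := ((cx c, cy c), cz c + 1).

(* the four horizontal directions (outward normals of vertical cells) *)
Inductive hdir := dE | dN | dW | dS.
Definition dvec (d : hdir) : pos :=
  match d with dE => (1, 0) | dN => (0, 1) | dW => (-1, 0) | dS => (0, -1) end.
Definition rotl (d : hdir) : hdir :=
  match d with dE => dN | dN => dW | dW => dS | dS => dE end.
Definition rotr (d : hdir) : hdir :=
  match d with dE => dS | dS => dW | dW => dN | dN => dE end.
Definition opp (d : hdir) : hdir := rotl (rotl d).
(* two vertical cells are parallel iff their normals are parallel *)
Definition parallel (d d' : hdir) : Prop := d' = d \/ d' = opp d.

Definition adj4 (p q : pos) : Prop := exists d, q = padd p (dvec d).

(* A polycube is given by the finite list of its unit cubes. *)
Definition cubeb (c c' : cube) : bool :=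
  (cx c =? cx c') && (cy c =? cy c') && (cz c =? cz c').
Definition memb (P : list cube) (c : cube) : bool := existsb (cubeb c) P.

Definition zlo (P : list cube) : Z :=
  match P with [] => 0 | c :: r => fold_right (fun c' a => Z.min (cz c') a) (cz c) r end.
Definition zhi (P : list cube) : Z :=
  match P with [] => 0 | c :: r => fold_right (fun c' a => Z.max (cz c') a) (cz c) r end.
(* planes z_0 < ... < z_m are z = zlo + j (j = 0..m); layer O_i (1 <= i <= m)
   consists of the cubes with z-coordinate zlo + i - 1 *)
Definition nlayers (P : list cube) : Z := zhi P - zlo P + 1.
Definition zplane (P : list cube) (i : Z) : Z := zlo P + i.

Definition pt := (R * R * R)%type.
Definition px (x : pt) : R := fst (fst x).
Definition py (x : pt) : R := snd (fst x).
Definition pz (x : pt) : R := snd x.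

Definition in_cube (c : cube) (x : pt) : Prop :=
  (IZR (cx c) <= px x <= IZR (cx c) + 1)%R /\
  (IZR (cy c) <= py x <= IZR (cy c) + 1)%R /\
  (IZR (cz c) <= pz x <= IZR (cz c) + 1)%R.

Definition solid (P : list cube) (x : pt) : Prop :=
  exists c, memb P c = true /\ in_cube c x.

Definition layer_solid (P : list cube) (i : Z) (x : pt) : Prop :=
  exists c, memb P c = true /\ cz c = zlo P + i - 1 /\ in_cube c x.

Definition d3 (x y : pt) : R :=
  (Rabs (px x - px y) + Rabs (py x - py y) + Rabs (pz x - pz y))%R.

Definition surface (P : list cube) (x : pt) : Prop :=
  solid P x /\ forall eps, (0 < eps)%R -> exists y, (d3 x y < eps)%R /\ ~ solid P y.

Definition unit_sphere (x : pt) : Prop :=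
  (px x * px x + py x * py x + pz x * pz x = 1)%R.

Definition continuous_on (A : pt -> Prop) (f : pt -> pt) : Prop :=
  forall x, A x -> forall eps, (0 < eps)%R -> exists delta, (0 < delta)%R /\
    forall y, A y -> (d3 x y < delta)%R -> (d3 (f x) (f y) < eps)%R.

Definition homeomorphic (A B : pt -> Prop) : Prop :=
  exists f g : pt -> pt,
    (forall x, A x -> B (f x)) /\ (forall y, B y -> A (g y)) /\
    (forall x, A x -> g (f x) = x) /\ (forall y, B y -> f (g y) = y) /\
    continuous_on A f /\ continuous_on B g.

Definition is_polycube (P : list cube) : Prop := homeomorphic (surface P) unit_sphere.

Definition lerp (x y : pt) (t : R) : pt :=
  ((px x + t * (px y - px x), py x + t * (py y - py x)), pz x + t * (pz y - pz x))%R.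

Definition axis_aligned (x y : pt) : Prop :=
  (px x = px y /\ py x = py y) \/ (px x = px y /\ pz x = pz y) \/
  (py x = py y /\ pz x = pz y).

Definition orth_convex_layers (P : list cube) : Prop :=
  forall i, 1 <= i <= nlayers P ->
  forall x y, layer_solid P i x -> layer_solid P i y -> axis_aligned x y ->
  forall t, (0 <= t <= 1)%R -> layer_solid P i (lerp x y t).

(* vertical cell: the face of cube vc with outward normal vd *)
Record vcell := VCell { vc : cube ; vd : hdir }.

Definition vsurf (P : list cube) (v : vcell) : Prop :=
  memb P (vc v) = true /\ memb P (cshift (vc v) (dvec (vd v))) = false.

Definition band (P : list cube) (i : Z) (v : vcell) : Prop :=
  vsurf P v /\ cz (vc v) = zlo P + i - 1.

Definition hsurf (P : list cube) (k : Z) (p : pos) : Prop :=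
  memb P (mkcube p (k - 1)) <> memb P (mkcube p k).
Definition topcell (P : list cube) (k : Z) (p : pos) : Prop :=
  memb P (mkcube p (k - 1)) = true /\ memb P (mkcube p k) = false.
Definition botcell (P : list cube) (k : Z) (p : pos) : Prop :=
  memb P (mkcube p k) = true /\ memb P (mkcube p (k - 1)) = false.

Inductive reach (S : pos -> Prop) : pos -> pos -> Prop :=
| reach_refl p : S p -> reach S p p
| reach_step p q r : reach S p q -> adj4 q r -> S r -> reach S p r.

Definition run (P : list cube) (k : Z) (s t : pos) (j : Z) : Prop :=
  forall j', 0 <= j' <= j -> hsurf P k (padd s (pscale j' t)).

(* q is a cell of the beam of the vertical cell v through its horizontal
   edge in the plane z = k (the edge between the columns of vc v and of
   vc v + vd v): the maximal straight strip of face cells starting at the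
   face cell adjacent to that edge, in the direction orthogonal to v *)
Definition in_beam (P : list cube) (k : Z) (v : vcell) (q : pos) : Prop :=
  let c := xy (vc v) in let d := dvec (vd v) in
  (exists j, 0 <= j /\ run P k c (pscale (-1) d) j /\ q = padd c (pscale (- j) d)) \/
  (exists j, 0 <= j /\ run P k (padd c d) d j /\ q = padd c (pscale (j + 1) d)).

(* i-beam(v), for v on the i-band or on the (i+1)-band *)
Definition ibeam (P : list cube) (i : Z) (v : vcell) (q : pos) : Prop :=
  in_beam P (zplane P i) v q.

(* the far end edge of the beam of v in plane k: between the last beam cell p
   and the next (non-face) position p' *)
Definition far_edge (P : list cube) (k : Z) (v : vcell) (p p' : pos) : Prop :=
  let c := xy (vc v) in let d := dvec (vd v) in
  (exists j, 0 <= j /\ run P k c (pscale (-1) d) j /\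
     ~ hsurf P k (padd c (pscale (- (j + 1)) d)) /\
     p = padd c (pscale (- j) d) /\ p' = padd c (pscale (- (j + 1)) d)) \/
  (exists j, 0 <= j /\ run P k (padd c d) d j /\
     ~ hsurf P k (padd c (pscale (j + 2) d)) /\
     p = padd c (pscale (j + 1) d) /\ p' = padd c (pscale (j + 2) d)).

Definition edge_cols (v : vcell) (p p' : pos) : Prop :=
  (xy (vc v) = p /\ padd (xy (vc v)) (dvec (vd v)) = p') \/
  (xy (vc v) = p' /\ padd (xy (vc v)) (dvec (vd v)) = p).

(* vertical cell v shares a horizontal edge with the horizontal cell at q
   (in the plane of that edge) *)
Definition vh_adj (v : vcell) (q : pos) : Prop :=
  q = xy (vc v) \/ q = padd (xy (vc v)) (dvec (vd v)).

Definition iface_of_beam (P : list cube) (i : Z) (v : vcell) (q : pos) : Prop :=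
  exists q0, ibeam P i v q0 /\ reach (hsurf P (zplane P i)) q0 q.

Inductive pointer := cw | ccw.
Definition flip (p : pointer) : pointer := match p with cw => ccw | ccw => cw end.
(* direction of motion along a band cell with normal d, walking in direction ptr *)
Definition pdir (ptr : pointer) (d : hdir) : hdir :=
  match ptr with ccw => rotl d | cw => rotr d end.

(* the next cell of the band (boundary of the layer cross-section) when
   walking from v in direction ptr *)
Definition succ (P : list cube) (ptr : pointer) (v : vcell) : vcell :=
  let c := vc v in let d := vd v in let w := pdir ptr d in
  let a := cshift c (dvec w) in
  let b := cshift a (dvec d) in
  if memb P b then VCell b (opp w)
  else if memb P a then VCell a d
  else VCell c w.

Definition period {A} (f : A -> A) (x : A) (n : nat) : Prop :=
  (0 < n)%nat /\ Nat.iter n f x = x /\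
  forall n', (0 < n' < n)%nat -> Nat.iter n' f x <> x.

(* i-clip(r) for an i-band cell r, given the i-pointer ptr: the part of the
   i-face containing i-beam(r) reachable from i-beam(r) in the closed half
   plane bounded by the line of the beam and lying on the side of the
   pointer direction *)
Definition clip (P : list cube) (i : Z) (ptr : pointer) (r : vcell) (q : pos) : Prop :=
  let w := dvec (pdir ptr (vd r)) in
  exists q0, ibeam P i r q0 /\
    reach (fun p => hsurf P (zplane P i) p /\ 0 <= pdot (psub p (xy (vc r))) w) q0 q.

Definition sameStrip (S : pos -> Prop) (u : pos) (q q' : pos) : Prop :=
  S q /\ exists j, q' = padd q (pscale j u) /\
    forall j', (0 <= j' <= j \/ j <= j' <= 0) -> S (padd q (pscale j' u)).

Definition stripAdj (S : pos -> Prop) (u : pos) (q q' : pos) : Prop :=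
  exists a b, sameStrip S u q a /\ sameStrip S u q' b /\ adj4 a b.

(* a chain of n consecutive adjacent beams (strips of S parallel to u),
   the first containing q and the last containing q' *)
Fixpoint chain (Sg : pos -> Prop) (u : pos) (n : nat) (q q' : pos) : Prop :=
  match n with
  | O => False
  | S O => sameStrip Sg u q q'
  | S n' => exists q'', stripAdj Sg u q q'' /\ chain Sg u n' q'' q'
  end.

Definition beam_chain (P : list cube) (i : Z) (ptr : pointer) (r v : vcell) (n : nat) : Prop :=
  exists q q', ibeam P i r q /\ ibeam P i v q' /\
    chain (clip P i ptr r) (dvec (vd r)) n q q'.

(* n = number of beams (of the partition of i-clip(r) into beams parallel to
   i-beam(r)) delimited by i-beam(r) and i-beam(v), both included *)
Definition nbeams (P : list cube) (i : Z) (ptr : pointer) (r v : vcell) (n : nat) : Prop :=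
  beam_chain P i ptr r v n /\ forall n', (n' < n)%nat -> ~ beam_chain P i ptr r v n'.

(* (doubled) centre of a vertical cell and Manhattan distance *)
Definition center2 (v : vcell) : Z * Z * Z :=
  let c := vc v in let d := dvec (vd v) in
  ((2 * cx c + 1 + fst d, 2 * cy c + 1 + snd d), 2 * cz c + 1).
Definition mdist (v v' : vcell) : Z :=
  let a := center2 v in let b := center2 v' in
  Z.abs (fst (fst a) - fst (fst b)) + Z.abs (snd (fst a) - snd (fst b)) +
  Z.abs (snd a - snd b).

Definition clip_empty (P : list cube) (i : Z) (ptr : pointer) (r : vcell) : Prop :=
  forall q, ~ clip P i ptr r q.

Definition goodR (P : list cube) (i : Z) (ptr : pointer) (r : vcell) : Prop :=
  clip_empty P i ptr r \/
  exists v q, band P (i + 1) v /\ parallel (vd r) (vd v) /\ clip P i ptr r q /\ vh_adj v q.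

Definition selectR (P : list cube) (i : Z) (ptr : pointer) (l r : vcell) : Prop :=
  exists n a, period (succ P ptr) l n /\ (a < n)%nat /\
    r = Nat.iter a (succ P ptr) l /\ goodR P i ptr r /\
    forall b, (a < b < n)%nat -> ~ goodR P i ptr (Nat.iter b (succ P ptr) l).

Definition candL (P : list cube) (i : Z) (ptr : pointer) (r v : vcell) : Prop :=
  band P (i + 1) v /\ parallel (vd r) (vd v) /\
  exists q, clip P i ptr r q /\ vh_adj v q.

Definition selectL (P : list cube) (i : Z) (ptr : pointer) (r v : vcell) : Prop :=
  candL P i ptr r v /\
  exists n, nbeams P i ptr r v n /\
    forall v' n', candL P i ptr r v' -> nbeams P i ptr r v' n' ->
      (n <= n')%nat /\ (n' = n -> mdist v r <= mdist v' r).

Definition above_adj (r v : vcell) : Prop :=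
  (vc v = cup (vc r) /\ vd v = vd r) \/
  (vc v = cup (cshift (vc r) (dvec (vd r))) /\ vd v = opp (vd r)).

Definition init_ok (P : list cube) (ptr : Z -> pointer) (L R : Z -> vcell) : Prop :=
  ptr 1 = ccw /\ ptr 2 = ccw /\
  band P 1 (R 1) /\ L 1 = succ P ccw (R 1) /\
  (exists q, ibeam P 1 (R 1) q) /\
  (forall q, iface_of_beam P 1 (R 1) q -> topcell P (zplane P 1) q) /\
  band P 2 (L 2) /\
  exists p p', far_edge P (zplane P 1) (R 1) p p' /\ edge_cols (L 2) p p'.

Definition step_ok (P : list cube) (ptr : Z -> pointer) (L R : Z -> vcell) (i : Z) : Prop :=
  selectR P i (ptr i) (L i) (R i) /\
  ((clip_empty P i (ptr i) (R i) /\ band P (i + 1) (L (i + 1)) /\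
    above_adj (R i) (L (i + 1)) /\ ptr (i + 1) = ptr i) \/
   (~ clip_empty P i (ptr i) (R i) /\ selectL P i (ptr i) (R i) (L (i + 1)) /\
    (vd (R i) = vd (L (i + 1)) -> ptr (i + 1) = ptr i) /\
    (vd (R i) <> vd (L (i + 1)) -> ptr (i + 1) = flip (ptr i)))).

Definition selection_upto (P : list cube) (ptr : Z -> pointer) (L R : Z -> vcell) (i : Z) : Prop :=
  init_ok P ptr L R /\ forall j, 2 <= j <= i -> step_ok P ptr L R j.

(* Main.v *)
Require Import Defs.
From Stdlib Require Import ZArith Reals Lia Lra List Classical.
Open Scope Z_scope.


Definition F (v : vcell) (t : Z) : Defs.pos := padd (xy (vc v)) (pscale t (dvec (vd v))).

Ltac peq := unfold F, padd, pscale, psub, xy, mkcube; apply injective_projections; cbn [fst snd]; ring.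

Lemma S_eq (S : Defs.pos -> Prop) a b : a = b -> S a -> S b.
Proof. intros ->; auto. Qed.

Definition side (S : Defs.pos -> Prop) (v : vcell) (t : Z) : Prop :=
  (t <= 0 /\ forall s, t <= s <= 0 -> S (F v s)) \/
  (1 <= t /\ forall s, 1 <= s <= t -> S (F v s)).

Lemma beam_char P k v x : in_beam P k v x <->
  exists t, x = F v t /\ side (hsurf P k) v t.
Proof.
  unfold in_beam, run, side, F. split.
  - intros [[j [Hj [Hr ->]]] | [j [Hj [Hr ->]]]].
    + exists (-j). split; [peq|]. left. split; [lia|]. intros s Hs.
      eapply S_eq; [|apply (Hr (-s)); lia]. peq.
    + exists (j+1). split; [peq|]. right. split; [lia|]. intros s Hs.
      eapply S_eq; [|apply (Hr (s-1)); lia]. peq.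
  - intros [t [-> [[Ht Hs]|[Ht Hs]]]].
    + left. exists (-t). split; [lia|]. split; [|peq].
      intros j' Hj'. eapply S_eq; [|apply (Hs (-j')); lia]. peq.
    + right. exists (t-1). split; [lia|]. split; [|peq].
      intros j' Hj'. eapply S_eq; [|apply (Hs (j'+1)); lia]. peq.
Qed.

Lemma side_self S v t : side S v t -> S (F v t).
Proof. intros [[H1 H2]|[H1 H2]]; [apply H2|apply H2]; lia. Qed.

Lemma ss_mono (S S' : Defs.pos -> Prop) u q q' :
  (forall p, S p -> S' p) -> sameStrip S u q q' -> sameStrip S' u q q'.
Proof.
  intros H [H0 [j [Hj Ha]]]. split; auto. exists j. split; auto.
Qed.

Lemma ss_sym S u q q' : sameStrip S u q q' -> sameStrip S u q' q.
Proof.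
  intros [H0 [j [-> Ha]]]. split.
  - apply Ha; lia.
  - exists (-j). split; [peq|]. intros j' Hj'.
    eapply S_eq; [|apply (Ha (j + j')); lia]. peq.
Qed.

Lemma ss_trans S u q q' q'' : sameStrip S u q q' -> sameStrip S u q' q'' ->
  sameStrip S u q q''.
Proof.
  intros [H0 [j [-> Ha]]] [H1 [j2 [-> Hb]]]. split; auto.
  exists (j + j2). split; [peq|]. intros j' Hj'.
  destruct (classic (0 <= j' <= j \/ j <= j' <= 0)) as [Hc|Hc].
  - apply Ha; auto.
  - eapply S_eq; [|apply (Hb (j' - j)); lia]. peq.
Qed.

Lemma ss_neg S u q q' : sameStrip S u q q' -> sameStrip S (pscale (-1) u) q q'.
Proof.
  intros [H0 [j [-> Ha]]]. split; auto. exists (-j). split; [peq|].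
  intros j' Hj'. eapply S_eq; [|apply (Ha (- j')); lia]. peq.
Qed.

Lemma ss_ueq S u u' q q' : u = u' -> sameStrip S u q q' -> sameStrip S u' q q'.
Proof. intros ->; auto. Qed.

Lemma beam_ss P k v x y : in_beam P k v x -> in_beam P k v y ->
  sameStrip (hsurf P k) (dvec (vd v)) x y.
Proof.
  rewrite !beam_char. intros [t1 [-> H1]] [t2 [-> H2]].
  assert (K : forall s, (t1 <= s <= t2 \/ t2 <= s <= t1) -> hsurf P k (F v s)).
  { intros s Hs.
    destruct H1 as [[a1 A1]|[a1 A1]]; destruct H2 as [[a2 A2]|[a2 A2]];
    destruct (Z_le_dec t1 s); destruct (Z_le_dec s 0); destruct (Z_le_dec t2 s); destruct (Z_le_dec s t1); destruct (Z_le_dec s t2);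
    first [apply A1; lia | apply A2; lia]. }
  split. { apply K; lia. }
  exists (t2 - t1). split. { unfold F; peq. }
  intros j' Hj'. eapply S_eq; [|apply (K (t1 + j')); lia]. unfold F; peq.
Qed.

Lemma ss_beam P k v x y : in_beam P k v x ->
  sameStrip (hsurf P k) (dvec (vd v)) x y -> in_beam P k v y.
Proof.
  rewrite !beam_char. intros [t [-> Ht]] [_ [m [-> Hm]]].
  assert (K : forall s, (t <= s <= t + m \/ t + m <= s <= t) -> hsurf P k (F v s)).
  { intros s Hs. eapply S_eq; [|apply (Hm (s - t)); lia]. unfold F; peq. }
  exists (t + m). split. { unfold F; peq. }
  unfold side. destruct (Z_le_dec (t + m) 0).
  - left. split; auto. intros s Hs.
    destruct Ht as [[a1 A1]|[a1 A1]]; destruct (Z_le_dec t s);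
    first [apply K; lia | apply A1; lia].
  - right. split; [lia|]. intros s Hs.
    destruct Ht as [[a1 A1]|[a1 A1]]; destruct (Z_le_dec s t);
    first [apply K; lia | apply A1; lia].
Qed.

Lemma dvec_opp d : dvec (opp d) = pscale (-1) (dvec d).
Proof. destruct d; reflexivity. Qed.

Lemma ss_par S d d' q q' : parallel d d' ->
  sameStrip S (dvec d) q q' -> sameStrip S (dvec d') q q'.
Proof.
  intros [->| ->] H; auto. rewrite dvec_opp. apply ss_neg; auto.
Qed.

Lemma ss_par' S d d' q q' : parallel d d' ->
  sameStrip S (dvec d') q q' -> sameStrip S (dvec d) q q'.
Proof.
  intros [->| ->] H; auto. rewrite dvec_opp in H. apply ss_neg in H.
  eapply ss_ueq; [|exact H]. peq.
Qed.

Lemma reach_in S p q : reach S p q -> S q.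
Proof. induction 1; auto. Qed.

Lemma beam_hsurf P i v x : ibeam P i v x -> hsurf P (zplane P i) x.
Proof.
  unfold ibeam. rewrite beam_char. intros [t [-> H]]. apply side_self; auto.
Qed.

Lemma beam_clip P i ptr r x : ibeam P i r x -> clip P i ptr r x.
Proof.
  intros H. exists x. split; auto. apply reach_refl. split.
  - eapply beam_hsurf; eauto.
  - unfold ibeam in H. rewrite beam_char in H. destruct H as [t [-> _]].
    unfold F, pdot, psub, padd, pscale. destruct (vd r), ptr; simpl; lia.
Qed.

Lemma clip_hsurf P i ptr r x : clip P i ptr r x -> hsurf P (zplane P i) x.
Proof. intros [q0 [_ H]]. apply reach_in in H. tauto. Qed.

Definition Bnd (P : list cube) : Z :=
  fold_right (fun c a => Z.abs (cx c) + Z.abs (cy c) + a) 0 P.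

Lemma Bnd_nonneg P : 0 <= Bnd P.
Proof. induction P; simpl; lia. Qed.

Lemma memb_bound P c : memb P c = true -> Z.abs (cx c) + Z.abs (cy c) <= Bnd P.
Proof.
  induction P as [|a P IH]; simpl; [discriminate|]. intros H.
  apply Bool.orb_true_iff in H. destruct H as [H|H].
  - unfold cubeb in H. apply andb_prop in H as [H H3]. apply andb_prop in H as [H1 H2].
    apply Z.eqb_eq in H1. apply Z.eqb_eq in H2. rewrite H1, H2.
    pose proof (Bnd_nonneg P). lia.
  - specialize (IH H). lia.
Qed.

Lemma hsurf_col P k p : hsurf P k p -> Z.abs (fst p) + Z.abs (snd p) <= Bnd P.
Proof.
  unfold hsurf. destruct (memb P (mkcube p (k-1))) eqn:E1.
  - intros _. apply memb_bound in E1. exact E1.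
  - destruct (memb P (mkcube p k)) eqn:E2; [|congruence].
    intros _. apply memb_bound in E2. exact E2.
Qed.

Lemma hsurf_F_bound P k v t : hsurf P k (F v t) ->
  Z.abs t <= Bnd P + Z.abs (fst (xy (vc v))) + Z.abs (snd (xy (vc v))).
Proof.
  intros H. apply hsurf_col in H. unfold F, padd, pscale, xy in *.
  destruct (vd v); cbn [fst snd dvec] in *; lia.
Qed.

Lemma find_end (Q : Z -> Prop) M : forall n : nat, forall t0,
  M - t0 < Z.of_nat n -> Q t0 -> (forall t, Q t -> t <= M) ->
  exists b, t0 <= b /\ (forall s, t0 <= s <= b -> Q s) /\ ~ Q (b+1).
Proof.
  induction n; intros t0 Hn Hq HM.
  - specialize (HM t0 Hq). lia.
  - destruct (classic (Q (t0+1))) as [H|H].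
    + destruct (IHn (t0+1)) as [b [B1 [B2 B3]]]; auto; [lia|].
      exists b. split; [lia|]. split; auto.
      intros s Hs. destruct (Z.eq_dec s t0); [subst; auto| apply B2; lia].
    + exists t0. split; [lia|]. split; auto.
      intros s Hs. replace s with t0 by lia. auto.
Qed.

Definition ctr (p : Defs.pos) (z : Z) : pt :=
  ((IZR (fst p) + /2, IZR (snd p) + /2), IZR z + /2)%R.

Lemma half_int (a b : Z) : (IZR a <= IZR b + /2 <= IZR a + 1)%R -> a = b.
Proof.
  intros [H1 H2].
  assert (a <= b).
  { destruct (Z_le_dec a b); auto. assert (b + 1 <= a) by lia.
    apply IZR_le in H. rewrite plus_IZR in H. lra. }
  assert (b <= a).
  { destruct (Z_le_dec b a); auto. assert (a + 1 <= b) by lia.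
    apply IZR_le in H0. rewrite plus_IZR in H0. lra. }
  lia.
Qed.

Lemma ls_ctr P i p z : z = zlo P + i - 1 -> memb P (mkcube p z) = true ->
  layer_solid P i (ctr p z).
Proof.
  intros Hz Hm. exists (mkcube p z). split; auto. split; auto.
  unfold in_cube, ctr, px, py, pz, mkcube, cx, cy, cz; simpl. lra.
Qed.

Lemma ctr_ls P i p z : z = zlo P + i - 1 -> layer_solid P i (ctr p z) ->
  memb P (mkcube p z) = true.
Proof.
  intros Hz [c [Hm [Hcz Hin]]]. destruct c as [[x y] w].
  unfold in_cube, ctr, px, py, pz, cx, cy, cz in *; simpl in *.
  destruct Hin as [A [B C]].
  apply half_int in A. apply half_int in B. apply half_int in C.
  unfold mkcube. subst. exact Hm.
Qed.

Lemma convex_row P i v z a' b' t :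
  orth_convex_layers P -> 1 <= i <= nlayers P -> z = zlo P + i - 1 ->
  memb P (mkcube (F v a') z) = true -> memb P (mkcube (F v b') z) = true ->
  a' < t < b' -> memb P (mkcube (F v t) z) = true.
Proof.
  intros HC Hi Hz Ha Hb Ht.
  apply (ctr_ls P i _ _ Hz).
  assert (Hba : (IZR a' < IZR b')%R) by (apply IZR_lt; lia).
  assert (Hat : (IZR a' < IZR t)%R) by (apply IZR_lt; lia).
  assert (Htb : (IZR t < IZR b')%R) by (apply IZR_lt; lia).
  set (tr := ((IZR t - IZR a') / (IZR b' - IZR a'))%R).
  assert (E : lerp (ctr (F v a') z) (ctr (F v b') z) tr = ctr (F v t) z).
  { unfold lerp, ctr, px, py, pz, F, padd, pscale, tr; simpl.
    rewrite !plus_IZR, !mult_IZR.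
    f_equal; [f_equal|]; field; lra. }
  rewrite <- E. apply (HC i Hi).
  - apply ls_ctr; auto.
  - apply ls_ctr; auto.
  - unfold axis_aligned, ctr, px, py, pz, F, padd, pscale; simpl.
    destruct (vd v); simpl; rewrite ?Z.mul_0_r, ?Z.add_0_r;
      [right; right | right; left | right; right | right; left]; split; reflexivity.
  - unfold tr. split.
    + unfold Rdiv. apply Rmult_le_pos; [lra|]. left. apply Rinv_0_lt_compat. lra.
    + apply Rmult_le_reg_r with (IZR b' - IZR a')%R; [lra|].
      unfold Rdiv. rewrite Rmult_assoc, Rinv_l; lra.
Qed.

Lemma cand_ok P i ptr r v0 x :
  band P (i + 1) v0 -> parallel (vd r) (vd v0) -> ibeam P i r x ->
  xy (vc v0) = x ->
  candL P i ptr r v0 /\ nbeams P i ptr r v0 1.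
Proof.
  intros Hb Hp Hx Hxy.
  assert (Hv : ibeam P i v0 x).
  { unfold ibeam. rewrite beam_char. exists 0. split.
    - unfold F. rewrite Hxy. peq.
    - left. split; [lia|]. intros s Hs. replace s with 0 by lia.
      eapply S_eq; [|eapply beam_hsurf; exact Hx]. unfold F. rewrite Hxy. peq. }
  split.
  - split; auto. split; auto. exists x. split; [apply beam_clip; auto|].
    left. auto.
  - split.
    + exists x, x. split; auto. split; auto. simpl. split; [apply beam_clip; auto|].
      exists 0. split; [peq|]. intros j' Hj'. replace j' with 0 by lia.
      eapply S_eq; [|apply beam_clip; exact Hx]. peq.
    + intros n' Hn'. destruct n'; [|lia]. intros [q [q' [_ [_ []]]]].
Qed.

Lemma xy_mk p z : xy (mkcube p z) = p.
Proof. destruct p; reflexivity. Qed.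

Theorem lemma7 (P : list cube) (ptr : Z -> pointer) (L R : Z -> vcell) (i : Z) :
  is_polycube P ->
  orth_convex_layers P ->
  1 <= i <= nlayers P - 1 ->
  selection_upto P ptr L R i ->
  (* the i-bridge is nonempty ... *)
  (exists q, ibeam P i (R i) q) ->
  (* ... and the i-face containing it is a bottom face *)
  (forall q, iface_of_beam P i (R i) q -> botcell P (zplane P i) q) ->
  (* then the i-bridge is a single beam: i-beam(L_{i+1}) = i-beam(R_i) *)
  forall q, ibeam P i (L (i + 1)) q <-> ibeam P i (R i) q.
Proof.
  intros _ HC Hi [Hinit Hsteps] [q Hq] Hbot.
  assert (Hface : forall x, ibeam P i (R i) x -> botcell P (zplane P i) x).
  { intros x Hx. apply Hbot. exists x. split; auto. apply reach_refl.
    eapply beam_hsurf; eauto. }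
  destruct (Z.eq_dec i 1) as [E|Hne].
  { subst i. exfalso. destruct Hinit as [_ [_ [_ [_ [_ [Htop _]]]]]].
    destruct (Htop q) as [T1 T2].
    { exists q. split; auto. apply reach_refl. eapply beam_hsurf; eauto. }
    destruct (Hface q Hq) as [B1 B2]. congruence. }
  destruct (Hsteps i ltac:(lia)) as [_ [[Hce _] | [_ [HselL _]]]].
  { exfalso. apply (Hce q). apply beam_clip; auto. }
  set (r := R i) in *. set (k := zplane P i) in *.
  assert (Hcand : exists v0, candL P i (ptr i) r v0 /\ nbeams P i (ptr i) r v0 1).
  { pose proof Hq as Hq'. unfold ibeam in Hq'. rewrite beam_char in Hq'.
    destruct Hq' as [t0 [Eq Hs0]].
    set (M := Bnd P + Z.abs (fst (xy (vc r))) + Z.abs (snd (xy (vc r)))).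
    set (Q := fun t => hsurf P k (F r t)).
    assert (HM : forall t, Q t -> Z.abs t <= M) by (intros t Ht; apply (hsurf_F_bound P k r t); exact Ht).
    assert (Q0 : Q t0) by (unfold Q; apply (side_self _ r t0); exact Hs0).
    destruct (find_end Q M (Z.to_nat (M - t0 + 1)) t0) as [b [B1 [B2 B3]]]; auto.
    { lia. }
    { intros t Ht. specialize (HM t Ht). lia. }
    destruct (find_end (fun t => Q (- t)) M (Z.to_nat (M + t0 + 1)) (- t0)) as [a [A1 [A2 A3]]].
    { lia. }
    { replace (- - t0) with t0 by lia; auto. }
    { intros t Ht. specialize (HM _ Ht). lia. }
    set (lo := - a).
    assert (Hin : forall s, lo <= s <= b -> ibeam P i r (F r s)).
    { intros s Hs. unfold ibeam. apply ss_beam with q; auto.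
      rewrite Eq. split; [exact Q0|]. exists (s - t0). split; [peq|].
      intros j' Hj'.
      assert (Qj : Q (t0 + j')).
      { destruct (Z_le_dec t0 (t0 + j')).
        - apply B2; lia.
        - replace (t0 + j') with (- - (t0 + j')) by lia. apply A2. unfold lo in Hs. lia. }
      eapply S_eq; [|exact Qj]. peq. }
    assert (Hbb : botcell P k (F r b)) by (apply Hface, Hin; lia).
    destruct Hbb as [Bb1 Bb2].
    assert (E1 : memb P (mkcube (F r (b+1)) (k-1)) = memb P (mkcube (F r (b+1)) k)).
    { unfold Q, hsurf in B3. destruct (memb P (mkcube (F r (b+1)) (k-1))),
        (memb P (mkcube (F r (b+1)) k)); tauto. }
    assert (E2 : memb P (mkcube (F r (lo-1)) (k-1)) = memb P (mkcube (F r (lo-1)) k)).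
    { unfold Q, hsurf in A3. replace (- (a + 1)) with (lo - 1) in A3 by (unfold lo; lia).
      destruct (memb P (mkcube (F r (lo-1)) (k-1))),
        (memb P (mkcube (F r (lo-1)) k)); tauto. }
    destruct (memb P (mkcube (F r (b+1)) k)) eqn:Eb.
    2:{ exists (VCell (mkcube (F r b) k) (vd r)). apply cand_ok with (F r b).
        - split; [split|].
          + exact Bb1.
          + cbn [vc vd]. replace (cshift (mkcube (F r b) k) (dvec (vd r))) with (mkcube (F r (b+1)) k); [exact Eb|].
            unfold cshift, mkcube, F, padd, pscale, xy, cx, cy, cz.
            apply injective_projections; [apply injective_projections|]; cbn [fst snd]; ring.
          + cbn [vc cz mkcube snd]. unfold k, zplane; lia.
        - left; reflexivity.
        - apply Hin; lia.
        - apply xy_mk. }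
    destruct (memb P (mkcube (F r (lo-1)) k)) eqn:Ea.
    2:{ exists (VCell (mkcube (F r lo) k) (opp (vd r))). apply cand_ok with (F r lo).
        - split; [split|].
          + assert (Hbl : botcell P k (F r lo)) by (apply Hface, Hin; lia). apply Hbl.
          + cbn [vc vd]. rewrite dvec_opp.
            replace (cshift (mkcube (F r lo) k) (pscale (-1) (dvec (vd r)))) with (mkcube (F r (lo-1)) k); [exact Ea|].
            unfold cshift, mkcube, F, padd, pscale, xy, cx, cy, cz.
            apply injective_projections; [apply injective_projections|]; cbn [fst snd]; ring.
          + cbn [vc cz mkcube snd]. unfold k, zplane; lia.
        - right; reflexivity.
        - apply Hin; lia.
        - apply xy_mk. }
    exfalso.
    assert (Hm : memb P (mkcube (F r b) (k - 1)) = true).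
    { apply (convex_row P i r (k-1) (lo - 1) (b + 1) b).
      all: first [exact HC | lia | unfold k, zplane; lia | congruence | unfold lo; lia]. }
    congruence. }
  destruct Hcand as [v0 [Hc Hnb]].
  destruct HselL as [HcL [n [Hn Hmin]]].
  destruct (Hmin v0 1%nat Hc Hnb) as [Hle _].
  destruct Hn as [Hbc _].
  destruct n as [|[|n]]; [destruct Hbc as [? [? [_ [_ []]]]] | | lia].
  destruct Hbc as [q1 [q1' [Hq1 [Hq1' Hs]]]]. cbn [chain] in Hs.
  assert (Hs' : sameStrip (hsurf P k) (dvec (vd r)) q1 q1').
  { eapply ss_mono; [|exact Hs]. intros p Hp. eapply clip_hsurf; eauto. }
  destruct HcL as [_ [Hpar _]].
  intros x; split; intros Hx.
  - pose proof (beam_ss P k _ x q1' Hx Hq1') as h1.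
    pose proof (ss_par' _ _ _ _ _ Hpar h1) as h2.
    pose proof (ss_trans _ _ _ _ _ h2 (ss_sym _ _ _ _ Hs')) as h3.
    apply ss_beam with q1; auto. apply ss_sym; auto.
  - pose proof (beam_ss P k _ q1 x Hq1 Hx) as h1.
    pose proof (ss_trans _ _ _ _ _ (ss_sym _ _ _ _ Hs') h1) as h2.
    apply ss_beam with q1'; auto. exact (ss_par _ _ _ _ _ Hpar h2).
Qed.
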